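(* Let $\Theta$ be a finite set of states, $\pi$ a probability distribution on $\Theta$ (Alice's prior), $\Gamma\subset\Theta$ with $0<\pi(\Gamma)<1$, and $\widetilde\pi$ another probability distribution on $\Theta$ (Carroll's prior). Then Carroll is $\Gamma$-optimistic if and only if $\widetilde\pi$ is a $\Gamma$-strengthening of $\pi$.
   Context: A signaling structure on $\Theta$ is a finite set $S$ of signals with probabilities $\sigma(s\mid\theta)\ge0$, $\sum_{s\in S}\sigma(s\mid\theta)=1$ for each $\theta$. For a prior $\rho$ on $\Theta$, $\mathbb{P}_{\rho,\sigma}$ is the probability on $\Theta\times S$ given by $\mathbb{P}_{\rho,\sigma}(\theta,s)=\rho(\theta)\sigma(s\mid\theta)$. Write $\mathbb{P}=\mathbb{P}_{\pi,\sigma}$ and $\widetilde{\mathbb{P}}=\mathbb{P}_{\widetilde\pi,\sigma}$. Alice's posterior of $\Gamma$ is $Q_\Gamma(s)=\mathbb{P}(\Gamma\mid s)$ (for $\mathbb{P}(s)>0$). $(Q_\Gamma,\widetilde{\mathbb{P}})$ denotes the random variable taking value $Q_\Gamma(s)$ with probability $\widetilde{\mathbb{P}}(s)$, and $(Q_\Gamma,\mathbb{P})$ the one taking value $Q_\Gamma(s)$ with probability $\mathbb{P}(s)$. $X\ge_{\mathrm{lr}}Y$ (likelihood ratio order) means $\mathbb{P}(X=v)/\mathbb{P}(Y=v)$ is weakly increasing in $v$ (equivalently $\mathbb{P}(X=u)\mathbb{P}(Y=v)\le\mathbb{P}(X=v)\mathbb{P}(Y=u)$ for $u<v$). Carroll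 is $\Gamma$-optimistic if $(Q_\Gamma,\widetilde{\mathbb{P}})\ge_{\mathrm{lr}}(Q_\Gamma,\mathbb{P})$ for every signaling structure $(S,\sigma)$ on $\Theta$. $\widetilde\pi$ is a $\Gamma$-strengthening of $\pi$ if $\widetilde\pi=a\pi^\Gamma+(1-a)\pi$ for some $a\in[0,1]$, where $\pi^\Gamma(\theta)=\pi(\theta\mid\Gamma)$. *)

(* Defs.v *)
From mathcomp Require Import all_boot all_order all_algebra.
Set Implicit Arguments. Unset Strict Implicit. Unset Printing Implicit Defensive.
Import Order.TTheory GRing.Theory Num.Theory.
Local Open Scope ring_scope.

Section Defs.
Variable R : realFieldType.

Definition is_distr (T : finType) (p : T -> R) : Prop :=
  (forall t, 0 <= p t) /\ \sum_(t : T) p t = 1.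

(* sig is a signaling structure on Theta with (finite) signal set S:
   sig th s = sigma(s | th) *)
Definition signaling (Theta S : finType) (sig : Theta -> S -> R) : Prop :=
  (forall th s, 0 <= sig th s) /\ (forall th, \sum_(s : S) sig th s = 1).

Definition sigP (Theta S : finType) (rho : Theta -> R) (sig : Theta -> S -> R)
  (s : S) : R := \sum_(th : Theta) rho th * sig th s.

(* Alice's posterior Q_Gamma(s) = P(Gamma | s); when P(s) = 0 the value is
   the field convention x / 0 = 0 *)
Definition QGamma (Theta S : finType) (pi : Theta -> R) (Gamma : {set Theta})
  (sig : Theta -> S -> R) (s : S) : R :=
  (\sum_(th in Gamma) pi th * sig th s) / sigP pi sig s.

(* probability mass function of the random variable taking value Q s with
   probability w s *)
Definition rv_pmf (S : finType) (Q : S -> R) (w : S -> R) (v : R) : R :=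
  \sum_(s : S | Q s == v) w s.

Definition lr_ge (pX pY : R -> R) : Prop :=
  forall u v : R, u < v -> pX u * pY v <= pX v * pY u.

Definition optimistic (Theta : finType) (pi pit : Theta -> R)
  (Gamma : {set Theta}) : Prop :=
  forall (S : finType) (sig : Theta -> S -> R), signaling sig ->
    lr_ge (rv_pmf (QGamma pi Gamma sig) (sigP pit sig))
          (rv_pmf (QGamma pi Gamma sig) (sigP pi sig)).

Definition cond_prior (Theta : finType) (pi : Theta -> R) (Gamma : {set Theta})
  (th : Theta) : R :=
  (if th \in Gamma then pi th else 0) / \sum_(t in Gamma) pi t.

Definition strengthening (Theta : finType) (pi pit : Theta -> R)
  (Gamma : {set Theta}) : Prop :=
  exists a : R, 0 <= a <= 1 /\
    forall th, pit th = a * cond_prior pi Gamma th + (1 - a) * pi th.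

End Defs.

(* Main.v *)
Require Import Defs.
From mathcomp Require Import all_boot all_order all_algebra.
From mathcomp Require Import ring lra.
Import Order.TTheory GRing.Theory Num.Theory.
Local Open Scope ring_scope.
Set Implicit Arguments. Unset Strict Implicit.

Lemma lim0 (R : realFieldType) (b k e0 : R) : 0 < e0 ->
  (forall e, 0 < e -> e <= e0 -> b + e * k <= 0) -> b <= 0.
Proof.
move=> e0p H; rewrite leNgt; apply/negP => bp.
have kp : 0 < `|k| + 1 by have := normr_ge0 k; lra.
set e := Num.min e0 (b / (`|k| + 1)).
have ep : 0 < e by rewrite lt_min e0p divr_gt0.
have h := H e ep ltac:(by rewrite ge_min lexx).
have h2 : e <= b / (`|k| + 1) by rewrite ge_min lexx orbT.
rewrite ler_pdivlMr // in h2.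
have h3 := ler_norm (-(e*k)); rewrite normrN normrM (gtr0_norm ep) in h3.
nra.
Qed.

Lemma lim0' (R : realFieldType) (b k e0 : R) : 0 < e0 ->
  (forall e, 0 < e -> e <= e0 -> 0 <= b + e * k) -> 0 <= b.
Proof.
move=> e0p H; rewrite -oppr_le0; apply: (@lim0 R (-b) (-k) e0 e0p) => e ep ee.
have := H e ep ee; lra.
Qed.

Lemma backward (R : realFieldType) (Theta : finType)
  (pi pit : Theta -> R) (Gamma : {set Theta}) :
  is_distr pi -> 0 < \sum_(t in Gamma) pi t ->
  strengthening pi pit Gamma -> optimistic pi pit Gamma.
Proof.
move=> [pi0 _] g0 [a [/andP [a0 a1] Hpit]] S sig [sig0 sig1] u v uv.
set g := \sum_(t in Gamma) pi t in g0 Hpit *.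
set Q := QGamma pi Gamma sig.
have G_le : forall s, \sum_(th in Gamma) pi th * sig th s <= sigP pi sig s.
  move=> s; rewrite /sigP [X in _ <= X](bigID (mem Gamma)) /= lerDl.
  by apply: sumr_ge0 => *; apply: mulr_ge0.
have GQ : forall s, \sum_(th in Gamma) pi th * sig th s = Q s * sigP pi sig s.
  move=> s; rewrite /Q /QGamma; have [Pe|nz] := eqVneq (sigP pi sig s) 0.
    rewrite Pe mulr0; apply: le_anti; rewrite sumr_ge0 ?andbT.
      by have := G_le s; rewrite Pe.
    by move=> *; apply: mulr_ge0.
  by rewrite divfK.
have hP : forall s, sigP pit sig s = (1 - a + a * Q s / g) * sigP pi sig s.
  move=> s; rewrite /sigP.
  have -> : \sum_th pit th * sig th s =
     a / g * \sum_th (if th \in Gamma then pi th * sig th s else 0)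
     + (1 - a) * \sum_th pi th * sig th s.
    rewrite !mulr_sumr -big_split; apply: eq_bigr => th _.
    rewrite Hpit /cond_prior -/g /=; case: ifP => _; ring.
  rewrite -big_mkcond GQ -/(sigP pi sig s); ring.
have pm : forall w, rv_pmf Q (sigP pit sig) w =
     (1 - a + a * w / g) * rv_pmf Q (sigP pi sig) w.
  by move=> w; rewrite /rv_pmf mulr_sumr; apply: eq_bigr => s /eqP <-; apply: hP.
rewrite !pm.
have Xge : forall w, 0 <= rv_pmf Q (sigP pi sig) w.
  move=> w; apply: sumr_ge0 => s _; apply: sumr_ge0 => th _; exact: mulr_ge0.
rewrite -!mulrA (mulrC (rv_pmf Q (sigP pi sig) v)).
rewrite [X in X <= _]mulrC [X in _ <= X]mulrC.
apply: ler_wpM2l; first by apply: mulr_ge0.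
rewrite lerD2l; apply: ler_wpM2l => //; apply: ler_wpM2r; first by rewrite invr_ge0 ltW.
exact: ltW.
Qed.

Lemma pmf_bool (R : realFieldType) (Q w : bool -> R) (b : bool) :
  Q true != Q false -> rv_pmf Q w (Q b) = w b.
Proof.
move=> ne; rewrite /rv_pmf big_mkcond big_bool /=.
case: b; rewrite eqxx ?(negbTE ne) ?add0r //.
by rewrite eq_sym (negbTE ne) addr0.
Qed.

Lemma key (R : realFieldType) (Theta : finType)
  (pi pit : Theta -> R) (Gamma : {set Theta}) (x : Theta -> R) :
  is_distr pi -> is_distr pit -> optimistic pi pit Gamma ->
  (forall th, 0 <= x th <= 1) ->
  0 < \sum_th pi th * x th < 1 ->
  (\sum_(th in Gamma) pi th * x th < (\sum_(t in Gamma) pi t) * \sum_th pi th * x th ->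
     \sum_th pit th * x th <= \sum_th pi th * x th) /\
  ((\sum_(t in Gamma) pi t) * \sum_th pi th * x th < \sum_(th in Gamma) pi th * x th ->
     \sum_th pi th * x th <= \sum_th pit th * x th).
Proof.
move=> [pi0 pi1] [pit0 pit1] opt x01 /andP [P0 P1].
set sig := fun th (b : bool) => if b then x th else 1 - x th.
have sg : signaling sig.
  split => [th [] | th]; rewrite /sig.
  - by case/andP: (x01 th).
  - by case/andP: (x01 th) => _; rewrite subr_ge0.
  - by rewrite big_bool /= addrC subrK.
have H := opt _ sig sg.
set g := \sum_(t in Gamma) pi t.
set P := \sum_th pi th * x th.
set Pt := \sum_th pit th * x th.
set G := \sum_(th in Gamma) pi th * x th.
have eP1 : sigP pi sig true = P by [].
have eP2 : sigP pi sig false = 1 - P.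
  rewrite /sigP /sig /=; under eq_bigr do rewrite mulrBr mulr1.
  by rewrite sumrB pi1.
have eT1 : sigP pit sig true = Pt by [].
have eT2 : sigP pit sig false = 1 - Pt.
  rewrite /sigP /sig /=; under eq_bigr do rewrite mulrBr mulr1.
  by rewrite sumrB pit1.
have eQ1 : QGamma pi Gamma sig true = G / P by [].
have eQ2 : QGamma pi Gamma sig false = (g - G) / (1 - P).
  rewrite /QGamma eP2 /sig /=; under eq_bigr do rewrite mulrBr mulr1.
  by rewrite sumrB.
have P0' : 0 < P := P0.
have P1'' : P < 1 := P1.
have P1' : 0 < 1 - P by rewrite subr_gt0.
clear P0 P1.
have cmp : (G / P < (g - G) / (1 - P)) = (G < g * P).
  rewrite ltr_pdivrMr // mulrAC ltr_pdivlMr //.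
  apply/idP/idP => h; nra.
have cmp' : ((g - G) / (1 - P) < G / P) = (g * P < G).
  rewrite ltr_pdivrMr // mulrAC ltr_pdivlMr //.
  apply/idP/idP => h; nra.
split => h.
- have lt : QGamma pi Gamma sig true < QGamma pi Gamma sig false.
    by rewrite eQ1 eQ2 cmp.
  have := H _ _ lt; rewrite !pmf_bool ?lt_eqF //.
  rewrite eP1 eP2 eT1 eT2 => h2; nra.
- have lt : QGamma pi Gamma sig false < QGamma pi Gamma sig true.
    by rewrite eQ1 eQ2 cmp'.
  have := H _ _ lt; rewrite !pmf_bool ?gt_eqF //.
  rewrite eP1 eP2 eT1 eT2 => h2; nra.
Qed.

Definition wt (R : realFieldType) (Theta : finType) (pi : Theta -> R)
  (Gamma : {set Theta}) (z : Theta) : R :=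
  pi z * ((z \in Gamma)%:R - \sum_(t in Gamma) pi t).

Lemma sum_delta (R : realFieldType) (Theta : finType) (f : Theta -> R) a (s : R) :
  \sum_z f z * (if z == a then s else 0) = f a * s.
Proof.
rewrite (bigD1 a) //= eqxx big1 ?addr0 // => z /negbTE ->; exact: mulr0.
Qed.

Lemma le1 (R : realFieldType) (Theta : finType) (pi : Theta -> R) z :
  is_distr pi -> pi z <= 1.
Proof.
move=> [pi0 pi1]; rewrite -pi1 (bigD1 z) //= lerDl.
by apply: sumr_ge0 => *; apply: pi0.
Qed.

Lemma pair (R : realFieldType) (Theta : finType)
  (pi pit : Theta -> R) (Gamma : {set Theta}) (th th' : Theta) (s t : R) :
  is_distr pi -> is_distr pit -> optimistic pi pit Gamma ->
  th != th' -> 0 <= s -> 0 <= t -> s + t < 1 -> 0 < s * pi th + t * pi th' ->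
  (s * wt pi Gamma th + t * wt pi Gamma th' < 0 ->
     s * (pit th - pi th) + t * (pit th' - pi th') <= 0) /\
  (0 < s * wt pi Gamma th + t * wt pi Gamma th' ->
     0 <= s * (pit th - pi th) + t * (pit th' - pi th')).
Proof.
move=> Hpi Hpit opt ne s0 t0 st Ppos.
set x := fun z => (if z == th then s else 0) + (if z == th' then t else 0).
have sx : forall f : Theta -> R, \sum_z f z * x z = f th * s + f th' * t.
  by move=> f; rewrite /x; under eq_bigr do rewrite mulrDr; rewrite big_split /= !sum_delta.
have sG : \sum_(z in Gamma) pi z * x z = wt pi Gamma th * s + wt pi Gamma th' * t
      + (\sum_(t in Gamma) pi t) * \sum_z pi z * x z.
  rewrite big_mkcond /=.
  have -> : \sum_z (if z \in Gamma then pi z * x z else 0)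
          = \sum_z (pi z * (z \in Gamma)%:R) * x z.
    by apply: eq_bigr => z _; case: ifP => _; rewrite ?mulr1 ?mulr0 ?mul0r.
  rewrite !sx /wt; ring.
have x01 : forall z, 0 <= x z <= 1.
  move=> z; rewrite /x; case: eqP => [->|_]; first rewrite (negbTE ne).
  - by rewrite addr0 s0 /=; lra.
  - case: eqP => _; rewrite ?addr0 ?add0r ?lexx ?ler01 //=.
    rewrite t0 /=; lra.
have P1 : 0 < \sum_z pi z * x z < 1.
  rewrite sx; apply/andP; split; first lra.
  have := le1 th Hpi; have := le1 th' Hpi.
  case: Hpi => pi0 _; have := pi0 th; have := pi0 th'; nra.
have [K1 K2] := key Hpi Hpit opt x01 P1.
have sd : s * (pit th - pi th) + t * (pit th' - pi th')
   = \sum_z pit z * x z - \sum_z pi z * x z by rewrite !sx; ring.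
rewrite sd; split => h.
- by rewrite subr_le0; apply: K1; rewrite sG; lra.
- by rewrite subr_ge0; apply: K2; rewrite sG; lra.
Qed.

Lemma forward (R : realFieldType) (Theta : finType)
  (pi pit : Theta -> R) (Gamma : {set Theta}) :
  is_distr pi -> is_distr pit ->
  0 < \sum_(t in Gamma) pi t < 1 ->
  optimistic pi pit Gamma -> strengthening pi pit Gamma.
Proof.
move=> Hpi Hpit /andP [g0 g1] opt.
have Hp := pair Hpi Hpit opt.
have [pi0 pi1] := Hpi; have [pit0 pit1] := Hpit.
set g := \sum_(t in Gamma) pi t in g0 g1 Hp *.
set w := wt pi Gamma in Hp *.
have wE : forall z, w z = pi z * ((z \in Gamma)%:R - g) by [].
have [th0 [th0G p0]] : exists th0, th0 \notin Gamma /\ 0 < pi th0.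
  case: (pickP (fun z => (z \notin Gamma) && (0 < pi z))) => [z /andP [] | H0].
    by exists z.
  move: pi1; rewrite (bigID (mem Gamma)) /= -/g big1 ?addr0 => [e|z zn].
    by move: g1; rewrite e ltxx.
  have := H0 z; rewrite /= zn /=; move/negbT.
  by have := pi0 z; rewrite le_eqVlt => /orP [/eqP <- //| ->].
have [th1 [th1G p1]] : exists th1, th1 \in Gamma /\ 0 < pi th1.
  case: (pickP (fun z => (z \in Gamma) && (0 < pi z))) => [z /andP [] | H0].
    by exists z.
  move: g0; rewrite /g big1 ?ltxx // => z zn.
  have := H0 z; rewrite /= zn /=; move/negbT.
  by have := pi0 z; rewrite le_eqVlt => /orP [/eqP <- //| ->].
have ne01 : th0 != th1 by apply/eqP => e; move: th0G; rewrite e th1G.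
have w0n : w th0 < 0.
  rewrite wE (negbTE th0G) /= mulr0n; nra.
have w1p : 0 < w th1.
  rewrite wE th1G /= mulr1n; nra.
have wb : forall z, -1 <= w z <= 1.
  move=> z; rewrite wE; have := le1 z Hpi; have := pi0 z.
  case: (z \in Gamma) => /=; rewrite ?mulr1n ?mulr0n => h1 h2; apply/andP; split; nra.
set d := fun z => pit z - pi z in Hp *.
have L : forall th th', th != th' -> 0 < w th -> w th' < 0 ->
    w th * d th' = w th' * d th.
  move=> th th' ne wp wn.
  have pip : 0 < pi th'.
    rewrite lt0r pi0 andbT; apply/eqP => e; move: wn; rewrite wE e mul0r ltxx.
    done.
  have := wb th; have := wb th' => /andP [b1 b2] /andP [b3 b4].
  have := pi0 th => pth.
  set B0 := - w th' * d th + w th * d th'.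
  have Bp : 0 <= B0.
    apply: (@lim0' R B0 (d th) (- w th')); first lra.
    move=> e e0 ee.
    have [_ K] := Hp th th' ((- w th' + e) / 4) (w th / 4) ne
      ltac:(lra) ltac:(lra) ltac:(lra) ltac:(nra).
    have : 0 <= (- w th' + e) / 4 * d th + w th / 4 * d th'.
      apply: K; nra.
    rewrite /B0; nra.
  have Bn : B0 <= 0.
    apply: (@lim0 R B0 (- d th) (- w th')); first lra.
    move=> e e0 ee.
    have [K _] := Hp th th' ((- w th' - e) / 4) (w th / 4) ne
      ltac:(lra) ltac:(lra) ltac:(lra) ltac:(nra).
    have : (- w th' - e) / 4 * d th + w th / 4 * d th' <= 0.
      apply: K; nra.
    rewrite /B0; nra.
  have : B0 = 0 by apply: le_anti; rewrite Bp Bn.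
  rewrite /B0; lra.
have d0n : d th0 <= 0.
  have [K _] := Hp th0 th1 (1/2) 0 ne01 ltac:(lra) ltac:(lra) ltac:(lra) ltac:(nra).
  have : 1/2 * d th0 + 0 * d th1 <= 0 by apply: K; nra.
  lra.
have Z : forall th, pi th = 0 -> pit th = 0.
  move=> th pz.
  have ne : th != th0 by apply/eqP => e; move: p0; rewrite -e pz ltxx.
  have wz : w th = 0 by rewrite wE pz mul0r.
  have : d th / 2 <= 0.
    apply: (@lim0 R (d th / 2) (d th0) (1/4)); first lra.
    move=> e e0 ee.
    have [K _] := Hp th th0 (1/2) e ne ltac:(lra) ltac:(lra) ltac:(lra) ltac:(nra).
    have : 1/2 * d th + e * d th0 <= 0 by apply: K; rewrite wz; nra.
    lra.
  rewrite /d pz; have := pit0 th; lra.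
have C : forall th, d th * w th0 = d th0 * w th.
  move=> th; have [->|ne] := eqVneq th th0; first by rewrite mulrC.
  have := pi0 th; rewrite le_eqVlt => /orP [/eqP pz | pp].
    have wz : w th = 0 by rewrite wE -pz mul0r.
    by rewrite wz /d -pz (Z _ (esym pz)) subrr !mulr0 mul0r.
  case thG : (th \in Gamma).
    have wp : 0 < w th by rewrite wE thG /= mulr1n; nra.
    have := L th th0 ne wp w0n; lra.
  have wn : w th < 0 by rewrite wE thG /= mulr0n; nra.
  have ne1 : th1 != th by apply/eqP => e; move: th1G; rewrite e thG.
  have E1 := L th1 th ne1 w1p wn.
  have ne10 : th1 != th0 by rewrite eq_sym.
  have E2 := L th1 th0 ne10 w1p w0n.
  apply: (mulIf (lt0r_neq0 w1p)).
  transitivity (w th0 * (w th1 * d th)); first ring.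
  rewrite E1; transitivity (w th * (w th1 * d th0)); last ring.
  rewrite E2; ring.
pose c := d th0 / w th0.
have w0nz : w th0 != 0 by rewrite ltr0_neq0.
have c0 : 0 <= c by apply: mulr_le0 => //; rewrite invr_le0 ltW.
have dc : forall th, d th = c * w th.
  move=> th; apply: (mulIf w0nz); rewrite C /c; field.
  done.
exists (c * g); split.
  apply/andP; split; first by apply: mulr_ge0 => //; apply: ltW.
  have := pit0 th0; have : pit th0 = pi th0 + d th0 by rewrite /d; ring.
  rewrite dc wE (negbTE th0G) /= mulr0n => ->; nra.
move=> th; rewrite /cond_prior -/g.
have -> : pit th = pi th + d th by rewrite /d; ring.
rewrite dc wE; case: (th \in Gamma) => /=; rewrite ?mulr1n ?mulr0n.
  field; exact: lt0r_neq0.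
rewrite mul0r; ring.
Qed.

Unset Implicit Arguments. Set Strict Implicit.

Theorem proposition3 (R : realFieldType) (Theta : finType)
  (pi pit : Theta -> R) (Gamma : {set Theta}) :
  is_distr pi -> is_distr pit ->
  0 < \sum_(t in Gamma) pi t < 1 ->
  (optimistic pi pit Gamma <-> strengthening pi pit Gamma).
Proof.
move=> Hpi Hpit Hg; split.
  exact: forward.
by case/andP: Hg => g0 _; apply: backward.
Qed.
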